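(* Let $N\ge1$, $n\ge1$, and let $f=f(w)$ be a polynomial in one variable. Then in $\tilde{\mathcal A}_\hbar$, $$\Big[\sum_{i=1}^N\bar B_n(\bar w_i),E_1[f]\Big]=-\hbar\,E_1[f\cdot(\bar w+\hbar)^{n-1}],\qquad\Big[\sum_{i=1}^N\bar B_n(\bar w_i),F_1[f]\Big]=\hbar\,F_1[f\cdot(\bar w+\hbar)^{n-1}],$$ where $\bar w_i=w_i-(N-1)\mathbf t$ and $f\cdot(\bar w+\hbar)^{n-1}$ denotes the polynomial $w\mapsto f(w)\,(w-(N-1)\mathbf t+\hbar)^{n-1}$.
   Context: $\tilde{\mathcal A}_\hbar$ is the $\mathbb C[\hbar,\mathbf t]$-algebra generated by $w_1,\dots,w_N$, $\mathsf u_1^{\pm1},\dots,\mathsf u_N^{\pm1}$, $(w_i-w_j)^{-1}$ ($i\ne j$) with relations: the $w_i$ and $(w_i-w_j)^{-1}$ pairwise commute, $(w_i-w_j)(w_i-w_j)^{-1}=1$, $[\mathsf u_i,\mathsf u_j]=0$, $\mathsf u_i\mathsf u_i^{-1}=\mathsf u_i^{-1}\mathsf u_i=1$, $[\mathsf u_i^{\pm1},w_j]=\pm\delta_{ij}\hbar\mathsf u_i^{\pm1}$. For a one-variable polynomial $f$: $E_1[f]=\sum_{i=1}^Nf(w_i)\prod_{j\ne i}\frac{w_i-w_j-\mathbf t}{w_i-w_j}\mathsf u_i$ and $F_1[f]=\sum_{i=1}^Nf(w_i-\hbar)\prod_{j\ne i}\frac{w_i-w_j+\mathbf t}{w_i-w_j}\mathsf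 u_i^{-1}$. $B_n$ are the Bernoulli polynomials ($B_n(x+1)-B_n(x)=nx^{n-1}$, $\int_0^1B_n=0$) and $\bar B_n(w)=(-\hbar)^nB_n(-w/\hbar)/n$. *)

(* Defs.v *)
From HB Require Import structures.
From mathcomp Require Import all_boot all_order all_algebra complex.
From mathcomp Require Import Rstruct.
Set Implicit Arguments. Unset Strict Implicit. Unset Printing Implicit Defensive.
Import Order.TTheory GRing.Theory Num.Theory.
Local Open Scope ring_scope.

Notation CC := (Rdefinitions.R[i]).

Definition prim (p : {poly CC}) : {poly CC} :=
  \poly_(i < (size p).+1) (if i is k.+1 then p`_k / k.+1%:R else 0).

(* B_0 = 1 ; B_n = n * prim B_{n-1} - (int_0^1 n * prim B_{n-1}) ,
   i.e. B_n' = n B_{n-1} and int_0^1 B_n = 0. This is the standard definition,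
   equivalent to B_n(x+1)-B_n(x) = n x^(n-1), int_0^1 B_n = 0. *)
Fixpoint bernoulli (n : nat) : {poly CC} :=
  match n with
  | 0 => 1
  | m.+1 => let P := m.+1%:R *: prim (bernoulli m) in P - ((prim P).[1])%:P
  end.

Section Alg.
Variable A : algType CC.

Definition comm (x y : A) : A := x * y - y * x.

(* Coefficients in C[hbar,t]: a polynomial in t whose coefficients are
   polynomials in hbar; evaluated at central elements h, t of A. *)
Definition evc (h t : A) (c : {poly {poly CC}}) : A :=
  \sum_(k < size c) (map_poly (in_alg A) c`_k).[h] * t ^+ k.

(* Evaluation of f in C[hbar,t][w] at x *)
Definition fev (h t : A) (f : {poly {poly {poly CC}}}) (x : A) : A :=
  \sum_(m < size f) evc h t f`_m * x ^+ m.

(* hbar-homogenised Bernoulli: Bbar_n(x) = (-h)^n B_n(-x/h) / n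
   = (1/n) sum_k (B_n)_k (-h)^(n-k) x^k *)
Definition Bbar (h : A) (n : nat) (x : A) : A :=
  (n%:R^-1 : CC) *: \sum_(k < (size (bernoulli n))) 
      ((bernoulli n)`_k *: ((- h) ^+ (n - k) * x ^+ k)).

Variable N : nat.

(* E_1[g] = sum_i g(w_i) prod_{j<>i} (w_i-w_j-t)/(w_i-w_j) u_i *)
Definition E1 (t : A) (w : 'I_N -> A) (d : 'I_N -> 'I_N -> A) (u : 'I_N -> A)
    (g : A -> A) : A :=
  \sum_(i < N) g (w i) * (\prod_(j < N | j != i) ((w i - w j - t) * d i j)) * u i.

(* F_1[g] = sum_i g(w_i - h) prod_{j<>i} (w_i-w_j+t)/(w_i-w_j) u_i^{-1} *)
Definition F1 (h t : A) (w : 'I_N -> A) (d : 'I_N -> 'I_N -> A) (ui : 'I_N -> A)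
    (g : A -> A) : A :=
  \sum_(i < N) g (w i - h) * (\prod_(j < N | j != i) ((w i - w j + t) * d i j)) * ui i.

(* The defining relations of \tilde A_hbar (over C[hbar,t]) for generators
   w_i, u_i, ui_i (= u_i^{-1}), d i j (= (w_i - w_j)^{-1}, i <> j),
   with h, t the (central) images of hbar and t. *)
Definition Arels (h t : A) (w : 'I_N -> A) (d : 'I_N -> 'I_N -> A)
    (u ui : 'I_N -> A) : Prop :=
  (forall x, h * x = x * h) /\ (forall x, t * x = x * t) /\
      (forall i j, w i * w j = w j * w i) /\
      (forall i k l, k != l -> w i * d k l = d k l * w i) /\
      (forall i j k l, i != j -> k != l -> d i j * d k l = d k l * d i j) /\
      (forall i j, i != j -> (w i - w j) * d i j = 1) /\
      (forall i j, u i * u j = u j * u i) /\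
      (forall i, u i * ui i = 1 /\ ui i * u i = 1) /\
      (forall i j, comm (u i) (w j) = (i == j)%:R * h * u i) /\
      (forall i j, comm (ui i) (w j) = - ((i == j)%:R * h * ui i)).

End Alg.

(* Main.v *)
Require Import Defs.
From HB Require Import structures.
From mathcomp Require Import all_boot all_order all_algebra complex.
From mathcomp Require Import Rstruct.
Import GRing.Theory.
Local Open Scope ring_scope.
Import Num.Theory.

Lemma natCC_neq0 k : (k.+1%:R : CC) != 0.
Proof. by rewrite pnatr_eq0. Qed.

Lemma coef_prim p i : (prim p)`_i = if i is k.+1 then p`_k / k.+1%:R else 0.
Proof.
rewrite /prim coef_poly; case: i => [|k].
  by case: (0 < _)%N.
rewrite ltnS; case: ltnP => // hk.
by rewrite nth_default ?mul0r.
Qed.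

Lemma primD p q : prim (p + q) = prim p + prim q.
Proof. by apply/polyP => i; rewrite coefD !coef_prim; case: i => [|k]; rewrite ?addr0 // coefD mulrDl. Qed.

Lemma primZ c p : prim (c *: p) = c *: prim p.
Proof. by apply/polyP => i; rewrite coefZ !coef_prim; case: i => [|k]; rewrite ?mulr0 // coefZ mulrA. Qed.

Lemma primN p : prim (- p) = - prim p.
Proof. by rewrite -scaleN1r primZ scaleN1r. Qed.

Lemma primC c : prim c%:P = c *: 'X.
Proof.
apply/polyP => i; rewrite coefZ coefX coef_prim; case: i => [|k]; first by rewrite mulr0.
rewrite coefC; case: k => [|k] /=; first by rewrite divr1 mulr1.
by rewrite mul0r mulr0.
Qed.

Lemma prim0 p : (prim p).[0] = 0.
Proof. by rewrite horner_coef0 coef_prim. Qed.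

Lemma deriv_prim p : (prim p)^`() = p.
Proof.
apply/polyP => i; rewrite coef_deriv coef_prim /=.
by rewrite -[RHS](divfK (natCC_neq0 i)) mulr_natr.
Qed.

Lemma prim_bern1 m : (prim (bernoulli m)).[1] = (m == 0%N)%:R.
Proof.
case: m => [|m] /=.
  by rewrite -polyC1 primC scale1r hornerX.
by rewrite primD primN primC hornerD hornerN hornerZ hornerX mulr1 subrr.
Qed.

Lemma deriv0_const (p : {poly CC}) : p^`() = 0 -> p = (p`_0)%:P.
Proof.
move=> h0; apply/polyP => i; rewrite coefC; case: i => [|k] //=.
have /eqP := congr1 (fun q : {poly CC} => q`_k) h0.
by rewrite coef_deriv coef0 mulrn_eq0 /= => /eqP.
Qed.

Arguments deriv0_const {p}.

Lemma deriv_bern m : (bernoulli m.+1)^`() = m.+1%:R *: bernoulli m.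
Proof. by rewrite /= derivB derivC subr0 derivZ deriv_prim. Qed.

Lemma bern_diff01 m : (bernoulli m.+1).[1] - (bernoulli m.+1).[0] = m.+1%:R * (m == 0%N)%:R.
Proof.
rewrite /= !hornerD !hornerN !hornerC !hornerZ prim0 prim_bern1 mulr0.
by rewrite sub0r opprK subrK.
Qed.

Lemma bern_shift m :
  bernoulli m.+1 \Po ('X + 1) - bernoulli m.+1 = m.+1%:R *: 'X^m.
Proof.
elim: m => [|m IH].
  set D := (X in X = _); have hD : D^`() = 0.
    rewrite /D derivB deriv_comp deriv_bern derivD derivX derivC addr0 mulr1.
    by rewrite comp_polyZ /= -polyC1 comp_polyC subrr.
  rewrite (deriv0_const hD) -horner_coef0 /D hornerD hornerN horner_comp.
  rewrite [(_ + 1).[0]]hornerD hornerX hornerC add0r bern_diff01 expr0 alg_polyC.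
  by rewrite !mulr1.
set D := (X in X = _); have hD : (D - m.+2%:R *: 'X^(m.+1))^`() = 0.
  rewrite /D; move: (deriv_bern m.+1); move: (bernoulli m.+2) => b db.
  rewrite !derivB deriv_comp db derivD derivX derivC addr0 mulr1.
  rewrite comp_polyZ -scalerBr IH derivZ derivXn -scalerMnl.
  by rewrite scale1r /= subrr.
apply/eqP; rewrite -subr_eq0; apply/eqP.
rewrite (deriv0_const hD) -horner_coef0 /D !hornerD !hornerN horner_comp.
rewrite [(_ + 1).[0]]hornerD hornerX hornerC add0r bern_diff01 hornerZ hornerXn expr0n /=.
by rewrite !mulr0 subrr.
Qed.

Set Implicit Arguments. Unset Strict Implicit. Unset Printing Implicit Defensive.

Definition homf (R : nzRingType) (phi : CC -> R) (n : nat) (p : {poly CC}) (h y : R) : R :=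
  \sum_(k < size p) phi p`_k * ((- h) ^+ (n - k) * y ^+ k).

Lemma homf_morph (R R' : nzRingType) (phi : {rmorphism CC -> R}) (psi : {rmorphism R -> R'})
  n p h y : psi (homf phi n p h y) = homf (psi \o phi) n p (psi h) (psi y).
Proof.
rewrite /homf rmorph_sum; apply: eq_bigr => k _.
by rewrite !rmorphM !rmorphXn rmorphN.
Qed.

Lemma size_bern n : (size (bernoulli n) <= n.+1)%N.
Proof.
elim: n => [|n IH] /=; first by rewrite size_poly1.
apply: leq_trans (size_polyD _ _) _; rewrite geq_max size_polyN size_polyC.
rewrite (leq_trans (leq_b1 _)) // andbT.
apply: leq_trans (size_scale_leq _ _) _.
by apply: leq_trans (size_poly _ _) _.
Qed.

Lemma homf_field (F : fieldType) (phi : {rmorphism CC -> F}) n (p : {poly CC}) (H Y : F) :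
  H != 0 -> (size p <= n.+1)%N ->
  homf phi n p H Y = (- H) ^+ n * (map_poly phi p).[- (Y / H)].
Proof.
move=> H0 sp; rewrite horner_coef size_map_poly /homf mulr_sumr.
apply: eq_bigr => [[k hk]] _ /=; rewrite coef_map.
have kn : (k <= n)%N by rewrite -ltnS (leq_trans hk).
rewrite mulrCA -{2}(subnK kn) exprD -mulrA; congr (_ * _).
rewrite [RHS]mulrCA; congr (_ * _).
rewrite -exprMn; congr (_ ^+ _).
by rewrite mulrNN mulrC divfK.
Qed.

Lemma key_field (F : fieldType) (phi : {rmorphism CC -> F}) m (H Y : F) :
  H != 0 ->
  homf phi m.+1 (bernoulli m.+1) H (Y + H) - homf phi m.+1 (bernoulli m.+1) H Y
  = m.+1%:R * (H * (Y + H) ^+ m).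
Proof.
move=> H0; rewrite !homf_field ?size_bern //.
set z := - ((Y + H) / H).
have ez : - (Y / H) = z + 1.
  by rewrite /z mulrDl divff // opprD subrK.
rewrite ez -mulrBr.
have := congr1 (fun q => (map_poly phi q).[z]) (bern_shift m).
move: (bernoulli m.+1) => b.
rewrite /= rmorphB /= hornerD hornerN map_comp_poly horner_comp rmorphD /=.
rewrite map_polyX rmorph1 hornerD hornerX hornerC.
move=> hb; rewrite -opprB hb map_polyZ hornerZ map_polyXn hornerXn rmorph_nat.
rewrite exprS mulrN -mulrA -mulNr opprK [RHS]mulrCA; congr (_ * _).
rewrite mulrCA; congr (_ * _).
rewrite -exprMn /z mulrN mulNr opprK mulrC divfK //.
Qed.

Local Notation R2 := {poly {poly CC}}.
Local Notation K2 := {fraction R2}.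

Definition phi2 : {rmorphism CC -> R2} := (polyC \o polyC).

Lemma key_R2 m :
  homf phi2 m.+1 (bernoulli m.+1) ('X%:P) ('X + 'X%:P)
  - homf phi2 m.+1 (bernoulli m.+1) ('X%:P) 'X
  = m.+1%:R * ('X%:P * ('X + 'X%:P) ^+ m).
Proof.
apply/eqP; rewrite -tofrac_eq; apply/eqP.
rewrite rmorphB /= !homf_morph rmorphD /= key_field.
  by rewrite rmorphM /= rmorph_nat rmorphM rmorphXn rmorphD.
by rewrite tofrac_eq0 polyC_eq0 polyX_eq0.
Qed.

Section Transfer.
Variable A : algType CC.
Variables h x : A.
Hypothesis xh : GRing.comm x h.

Lemma cf1 : commr_rmorph (in_alg A) h.
Proof. by move=> a; apply: commr_sym; apply: comm_alg. Qed.

Local Notation Phi1 := (horner_morph cf1).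

Lemma cf2 : commr_rmorph Phi1 x.
Proof.
move=> q; rewrite /horner_morph horner_coef.
apply: commr_sum => i _; apply: commrM; last exact: commrX.
by rewrite coef_map; apply: commr_sym; apply: comm_alg.
Qed.

Local Notation Phi := (horner_morph cf2).

Lemma key_A m :
  homf (in_alg A) m.+1 (bernoulli m.+1) h (x + h)
  - homf (in_alg A) m.+1 (bernoulli m.+1) h x
  = m.+1%:R * (h * (x + h) ^+ m).
Proof.
have := congr1 Phi (key_R2 m).
rewrite rmorphB /= !homf_morph rmorphM rmorph_nat rmorphM rmorphXn rmorphD /=.
rewrite (horner_morphX cf2) (horner_morphC cf2).
rewrite /= (horner_morphX cf1) => <-.
rewrite /homf; congr (_ - _); apply: eq_bigr => k _; rewrite /= (horner_morphC cf2) /= (horner_morphC cf1) //.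
Qed.

End Transfer.

Section Main.
Variable A : algType CC.

Lemma Bbar_homf (h x : A) n : Bbar h n x = n%:R^-1 *: homf (in_alg A) n (bernoulli n) h x.
Proof. by rewrite /Bbar /homf; congr (_ *: _); apply: eq_bigr => k _; rewrite mulr_algl. Qed.

Lemma Bbar_shift (h x : A) n : (1 <= n)%N -> GRing.comm x h ->
  Bbar h n (x + h) - Bbar h n x = h * (x + h) ^+ n.-1.
Proof.
case: n => [|m] // _ xh; rewrite !Bbar_homf -scalerBr key_A // mulr_natl.
rewrite -scalerMnr scalerMnl -mulr_natr mulVf ?scale1r //.
by rewrite pnatr_eq0.
Qed.

Lemma comm_powshift (u z z' : A) k : u * z = z' * u -> u * z ^+ k = z' ^+ k * u.
Proof.
move=> e; elim: k => [|k IH]; first by rewrite !expr0 mulr1 mul1r.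
by rewrite !exprS mulrA e -mulrA IH mulrA.
Qed.

Lemma Bbar_commshift (u h z z' : A) n : u * z = z' * u -> GRing.comm u h ->
  u * Bbar h n z = Bbar h n z' * u.
Proof.
move=> e uh; rewrite /Bbar -scalerAr -scalerAl; congr (_ *: _).
rewrite mulr_sumr mulr_suml; apply: eq_bigr => k _.
rewrite -scalerAr -scalerAl; congr (_ *: _).
have uh' : GRing.comm u ((- h) ^+ (n - k)) by apply/commrX/commrN.
by rewrite mulrA uh' -mulrA (comm_powshift k e) mulrA.
Qed.

Lemma comm_Bbar (y h z : A) n : GRing.comm y h -> GRing.comm y z -> GRing.comm y (Bbar h n z).
Proof.
move=> yh yz; rewrite /Bbar /GRing.comm -scalerAl -scalerAr; congr (_ *: _).
apply: commr_sum => k _; rewrite /GRing.comm -scalerAl -scalerAr.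
congr (_ *: _); apply: commrM; [exact/commrX/commrN | exact/commrX].
Qed.

Lemma comm_hornerh (y h : A) (q : {poly CC}) : GRing.comm y h ->
  GRing.comm y (map_poly (in_alg A) q).[h].
Proof.
move=> yh; rewrite horner_coef; apply: commr_sum => i _; apply: commrM; last exact: commrX.
by rewrite coef_map; apply: commr_sym; apply: comm_alg.
Qed.

Lemma comm_fev (y h t z : A) f : GRing.comm y h -> GRing.comm y t -> GRing.comm y z ->
  GRing.comm y (fev h t f z).
Proof.
move=> yh yt yz; apply: commr_sum => m _; apply: commrM; last exact: commrX.
apply: commr_sum => k _; apply: commrM; last exact: commrX.
exact: comm_hornerh.
Qed.

End Main.

Section Main2.
Variable A : algType CC.

Lemma sum_comm_shift N (B : 'I_N -> A) (v c : A) i :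
  (forall k, k != i -> v * B k = B k * v) -> v * B i = c * v ->
  (\sum_(k < N) B k) * v - v * (\sum_(k < N) B k) = (B i - c) * v.
Proof.
move=> ok oi; rewrite mulr_suml mulr_sumr -sumrB (bigD1 i) //= big1 ?addr0.
  by rewrite oi mulrBl.
by move=> k ki; rewrite ok // subrr.
Qed.

Lemma comm_term (S X v : A) : GRing.comm S X ->
  S * (X * v) - X * v * S = X * (S * v - v * S).
Proof. by move=> SX; rewrite mulrA SX -!mulrA -mulrBr. Qed.

Lemma rearr (F P Q u h : A) : GRing.comm P Q -> (forall y, h * y = y * h) ->
  F * P * (h * Q * u) = h * (F * Q * P * u).
Proof.
move=> PQ hc; rewrite [RHS]hc (hc Q) -(mulrA Q) (hc u) !mulrA.
by rewrite -(mulrA F P) PQ !mulrA.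
Qed.

Lemma shift_wbar (v w0 c h : A) : v * w0 = (w0 + h) * v -> GRing.comm v c ->
  v * (w0 - c) = (w0 - c + h) * v.
Proof. by move=> e vc; rewrite mulrBr e vc -mulrBl addrAC. Qed.

End Main2.

Unset Implicit Arguments. Set Strict Implicit. Set Printing Implicit Defensive.

Theorem lemma6p4 (A : algType CC) (N n : nat) (hN : (1 <= N)%N) (hn : (1 <= n)%N)
    (h t : A) (w : 'I_N -> A) (d : 'I_N -> 'I_N -> A) (u ui : 'I_N -> A)
    (f : {poly {poly {poly CC}}}) :
  Arels h t w d u ui ->
  let wbar := fun x : A => x - (N.-1)%:R * t in
  let S := \sum_(i < N) Bbar h n (wbar (w i)) in
  let g := fun x : A => fev h t f x * (wbar x + h) ^+ n.-1 in
  comm S (E1 t w d u (fev h t f)) = - (h * E1 t w d u g) /\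
  comm S (F1 h t w d ui (fev h t f)) = h * F1 h t w d ui g.
Proof.
move=> [hc [tc [ww [wd [dd [wdi [uu [uinv [uw uiw]]]]]]]]] wbar S g.
have ch : forall y, GRing.comm y h by move=> y; apply/commr_sym/hc.
have ct : forall y, GRing.comm y t by move=> y; apply/commr_sym/tc.
have cwb : forall y, (forall j, GRing.comm y (w j)) -> forall j, GRing.comm y (wbar (w j)).
  by move=> y yw j; apply: commrB => //; apply: commrM; [exact: commr_nat | exact: ct].
have cS : forall y, (forall j, GRing.comm y (w j)) -> GRing.comm y S.
  move=> y yw; apply: commr_sum => j _; apply: comm_Bbar => //; exact: cwb.
have Sw : forall j, GRing.comm S (w j).
  by move=> j; apply/commr_sym/cS => k; apply: ww.
have Sh : GRing.comm S h by apply: ch.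
have St : GRing.comm S t by apply: ct.
have Sd : forall k l, k != l -> GRing.comm S (d k l).
  by move=> k l kl; apply/commr_sym/cS => j; apply/commr_sym/wd.
pose good y := (forall j, GRing.comm (w j) y) /\ (forall k l, k != l -> GRing.comm (d k l) y)
   /\ GRing.comm t y /\ GRing.comm h y.
have gD : forall a b, good a -> good b -> good (a + b).
  move=> a b [a1 [a2 [a3 a4]]] [b1 [b2 [b3 b4]]]; split; first by move=> j; apply: commrD.
  split; first by move=> k l kl; apply: commrD; [apply: a2 | apply: b2].
  by split; apply: commrD.
have gN : forall a, good a -> good (- a).
  move=> a [a1 [a2 [a3 a4]]]; split; first by move=> j; apply: commrN.
  split; first by move=> k l kl; apply: commrN; apply: a2.
  by split; apply: commrN.
have gB : forall a b, good a -> good b -> good (a - b) by move=> a b ga gb; apply: (gD) => //; apply: (gN).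
have gM : forall a b, good a -> good b -> good (a * b).
  move=> a b [a1 [a2 [a3 a4]]] [b1 [b2 [b3 b4]]]; split; first by move=> j; apply: commrM.
  split; first by move=> k l kl; apply: commrM; [apply: a2 | apply: b2].
  by split; apply: commrM.
have gX : forall a k, good a -> good (a ^+ k).
  move=> a m [a1 [a2 [a3 a4]]]; split; first by move=> j; apply: commrX.
  split; first by move=> k l kl; apply: commrX; apply: a2.
  by split; apply: commrX.
have g1 : good 1.
  split; first by move=> j; apply: commr1.
  split; first by move=> k l kl; apply: commr1.
  by split; apply: commr1.
have gnat : forall k, good k%:R.
  split; first by move=> j; apply: commr_nat.
  split; first by move=> k' l kl; apply: commr_nat.
  by split; apply: commr_nat.
have gprod : forall (i : 'I_N) (F : 'I_N -> A), (forall j, j != i -> good (F j)) ->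
    good (\prod_(j < N | j != i) F j).
  move=> i F gF; rewrite /good; split; first by move=> j; apply: commr_prod => k ki; case: (gF k ki).
  split; first by move=> k l kl; apply: commr_prod => k' ki; case: (gF k' ki) => _ [g2 _]; exact: g2.
  by split; apply: commr_prod => k ki; case: (gF k ki) => _ [_ []].
have gw : forall j, good (w j).
  move=> j; split; first by move=> i; apply: ww.
  split; first by move=> k l kl; apply/commr_sym/wd.
  by split; [apply: tc | apply: hc].
have gd : forall k l, k != l -> good (d k l).
  move=> k l kl; split; first by move=> j; apply: wd.
  split; first by move=> k' l' kl'; apply: dd.
  by split; [apply: tc | apply: hc].
have gt : good t.
  split; first by move=> j; apply/commr_sym/tc.
  split; first by move=> k l kl; apply/commr_sym/tc.
  by split; [apply: commr_refl | apply: hc].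
have gh : good h.
  split; first by move=> j; apply/commr_sym/hc.
  split; first by move=> k l kl; apply/commr_sym/hc.
  by split; [apply/commr_sym/hc | apply: commr_refl].
have gfev : forall z, good z -> good (fev h t f z).
  move=> z [z1 [z2 [z3 z4]]].
  have Ch : forall y, GRing.comm y h by move=> y; apply/commr_sym/hc.
  have Ct : forall y, GRing.comm y t by move=> y; apply/commr_sym/tc.
  split; first by move=> j; apply: comm_fev.
  split; first by move=> k l kl; apply: comm_fev => //; apply: z2.
  by split; apply: comm_fev.
have gwb : forall z, good z -> good (wbar z) by move=> z gz; apply: (gB) => //; apply: (gM).
have gPE : forall i : 'I_N, good (\prod_(j < N | j != i) ((w i - w j - t) * d i j)).
  by move=> i; apply: (gprod) => j ji; apply: (gM); [apply: (gB) => //; apply: (gB) | apply: (gd); rewrite eq_sym].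
have gPF : forall i : 'I_N, good (\prod_(j < N | j != i) ((w i - w j + t) * d i j)).
  by move=> i; apply: (gprod) => j ji; apply: (gM); [apply: (gD) => //; apply: (gB) | apply: (gd); rewrite eq_sym].
have SX : forall X, good X -> GRing.comm S X.
  move=> X [x1 [x2 [x3 x4]]]; apply/commr_sym; apply: commr_sum => k _.
  apply: comm_Bbar; first exact/commr_sym.
  apply: commrB; first exact/commr_sym.
  by apply: commrM; [exact: commr_nat | exact/commr_sym].
have XQ : forall X (i : 'I_N), good X ->
    GRing.comm X ((wbar (w i) + h) ^+ n.-1) /\ GRing.comm X (wbar (w i) ^+ n.-1).
  move=> X i [x1 [x2 [x3 x4]]].
  have xw : GRing.comm X (wbar (w i)).
    apply: commrB; first exact/commr_sym.
    by apply: commrM; [exact: commr_nat | exact/commr_sym].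
  by split; apply: commrX => //; apply: commrD => //; apply/commr_sym.
have uwi : forall i, u i * w i = (w i + h) * u i.
  move=> i; have := uw i i; rewrite /comm eqxx mul1r => /eqP; rewrite subr_eq => /eqP ->.
  by rewrite mulrDl addrC.
have uwk : forall i k, i != k -> u i * w k = w k * u i.
  move=> i k ik; have := uw i k; rewrite /comm (negbTE ik) /= mulr0n !mul0r => /eqP.
  by rewrite subr_eq0 => /eqP.
have uiwi : forall i, ui i * w i = (w i + - h) * ui i.
  move=> i; have := uiw i i; rewrite /comm eqxx mul1r => /eqP; rewrite subr_eq => /eqP ->.
  by rewrite mulrDl addrC mulNr.
have uiwk : forall i k, i != k -> ui i * w k = w k * ui i.
  move=> i k ik; have := uiw i k; rewrite /comm (negbTE ik) /= mulr0n !mul0r oppr0 => /eqP.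
  by rewrite subr_eq0 => /eqP.
have vct : forall v : A, GRing.comm v ((N.-1)%:R * t).
  by move=> v; apply: commrM; [exact: commr_nat | exact/commr_sym].
have vh : forall v : A, GRing.comm v h by move=> v; exact/commr_sym.
have wbh : forall i, GRing.comm (wbar (w i)) h by move=> i; exact: vh.
have Sdu : forall i, S * u i - u i * S = - (h * (wbar (w i) + h) ^+ n.-1) * u i.
  move=> i.
  have H1 := @sum_comm_shift A N (fun k => Bbar h n (wbar (w k))) (u i) (Bbar h n (wbar (w i) + h)) i.
  rewrite /S H1 /=.
  - by rewrite -opprB Bbar_shift.
  - move=> k ki; apply: Bbar_commshift => //.
    by apply: commrB; [apply: uwk; rewrite eq_sym | apply: vct].
  - by apply: Bbar_commshift => //; apply: shift_wbar.
have Sdui : forall i, S * ui i - ui i * S = (h * wbar (w i) ^+ n.-1) * ui i.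
  move=> i.
  have H1 := @sum_comm_shift A N (fun k => Bbar h n (wbar (w k))) (ui i) (Bbar h n (wbar (w i) - h)) i.
  rewrite /S H1 /=.
  - have e : wbar (w i) = wbar (w i) - h + h by rewrite subrK.
    by rewrite {1 3}e Bbar_shift // -e; apply: commrB.
  - move=> k ki; apply: Bbar_commshift => //.
    by apply: commrB; [apply: uiwk; rewrite eq_sym | apply: vct].
  - by apply: Bbar_commshift => //; apply: shift_wbar.
split.
- rewrite /comm /E1 mulr_sumr mulr_suml -sumrB mulr_sumr -sumrN; apply: eq_bigr => i _.
  rewrite comm_term; last by apply: SX; apply: (gM); [apply: (gfev); apply: (gw) | apply: gPE].
  rewrite Sdu /g mulNr mulrN rearr //.
  by case: (XQ _ i (gPE i)).
- rewrite /comm /F1 mulr_sumr mulr_suml -sumrB mulr_sumr; apply: eq_bigr => i _.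
  rewrite comm_term; last first.
    by apply: SX; apply: (gM); [apply: (gfev); apply: (gB) | apply: gPF].
  have e : wbar (w i - h) + h = wbar (w i) by rewrite /wbar addrAC subrK.
  rewrite Sdui /g e rearr //.
  by case: (XQ _ i (gPF i)).
Qed.
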